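(* Let $p$ be a prime and $a,b,c\ge0$ integers with $a,b<p$ and $c\le a+b$. Then: (1) $\deg f(a,b,c)=\min\{a,c\}$; (2) $v_t(f(a,b,c))=\max\{0,c-b\}$; (3) $v_{t-1}(f(a,b,c))=a+b-(p-1)$ if $a+b-(p-1)\le c\le p-1<a+b$, and $v_{t-1}(f(a,b,c))=0$ otherwise.
   Context: For non-negative integers $a,b,c$, $f(a,b,c)\in\overline{\mathbb{F}}_p[t]$ is the polynomial $f(a,b,c)=\sum_{i_2+i_3=c}\binom{a}{i_2}\binom{b}{i_3}t^{i_2}$ (binomial coefficients reduced mod $p$, $\binom{n}{i}=0$ for $i<0$ or $i>n$); equivalently the coefficient of $\lambda^c$ in $(1+\lambda t)^a(1+\lambda)^b$. $v_t$ and $v_{t-1}$ denote the orders of vanishing at $t=0$ and $t=1$. *)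

(* Defs.v *)
From mathcomp Require Import all_boot all_order all_algebra.
Set Implicit Arguments. Unset Strict Implicit. Unset Printing Implicit Defensive.
Import GRing.Theory.
Local Open Scope ring_scope.

(* f(a,b,c) = sum_{i2+i3=c} C(a,i2) C(b,i3) t^{i2}, with the binomial
   coefficients cast (hence reduced mod p) into the coefficient field F.
   The sum over i2 = i ranges over 0..c with i3 = c - i. *)
Definition fpol (F : fieldType) (a b c : nat) : {poly F} :=
  \sum_(i < c.+1) (('C(a, i) * 'C(b, c - i))%N)%:R *: 'X^i.

(* Main.v *)
Require Import Defs.
From mathcomp Require Import all_boot all_order all_algebra.
From mathcomp Require Import zify ring.
Import GRing.Theory.
Local Open Scope ring_scope.

Lemma binA (a i j : nat) : (j <= a)%N ->
  ('C(a, i + j) * 'C(i + j, j) = 'C(a, j) * 'C(a - j, i))%N.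
Proof.
move=> ja.
have [ija|ija] := leqP (i + j) a; last first.
  rewrite (@bin_small a) ?(@bin_small (a - j)) ?mul0n ?muln0 //; lia.
apply/eqP; rewrite -(@eqn_pmul2r (j`! * i`! * (a - (i + j))`!)); last first.
  by rewrite !muln_gt0 !fact_gt0.
have e1 : ('C(i + j, j) * (j`! * i`!) = (i + j)`!)%N.
  by rewrite -(@bin_fact (i+j) j) ?leq_addl // addnK.
have e2 : ('C(a - j, i) * (i`! * (a - (i + j))`!) = (a - j)`!)%N.
  have -> : (a - (i+j) = a - j - i)%N by lia.
  rewrite bin_fact //; lia.
have e3 : ('C(a, i + j) * ((i + j)`! * (a - (i + j))`!) = a`!)%N by rewrite bin_fact.
have e4 : ('C(a, j) * (j`! * (a - j)`!) = a`!)%N by rewrite bin_fact.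
apply/eqP.
have -> : ('C(a, i + j) * 'C(i + j, j) * (j`! * i`! * (a - (i + j))`!) =
   'C(a, i + j) * ('C(i + j, j) * (j`! * i`!)) * (a - (i + j))`!)%N by ring.
rewrite e1 -mulnA e3.
have -> : ('C(a, j) * 'C(a - j, i) * (j`! * i`! * (a - (i + j))`!) =
   'C(a, j) * j`! * ('C(a - j, i) * (i`! * (a - (i + j))`!)))%N by ring.
by rewrite e2 -mulnA e4.
Qed.

Lemma sum_id (a b c j : nat) : (j <= c)%N ->
  (\sum_(i < c.+1) 'C(a, i) * 'C(b, c - i) * 'C(i, j) =
   'C(a, j) * 'C(a + b - j, c - j))%N.
Proof.
move=> jc.
have [ja|aj] := leqP j a; last first.
  rewrite bin_small // mul0n big1 // => i _.
  have [ij|ji] := ltnP i j; first by rewrite (@bin_small i) ?muln0.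
  by rewrite (@bin_small a) ?mul0n //; lia.
rewrite -(big_mkord xpredT (fun i => 'C(a, i) * 'C(b, c - i) * 'C(i, j))%N).
rewrite (@big_cat_nat _ _ _ j) /=; [|by []|by lia].
rewrite big1_seq ?add0n; last first.
  move=> i; rewrite mem_index_iota => /andP[_ ij].
  by rewrite (@bin_small i) ?muln0.
rewrite -{1}[j]add0n big_addn.
rewrite (eq_bigr (fun i => 'C(a, j) * ('C(a - j, i) * 'C(b, (c - j) - i)))%N);
  last first.
  move=> i _; rewrite -mulnA (mulnC 'C(b, _)) mulnA binA //.
  have -> : (c - (i + j) = c - j - i)%N by lia.
  by rewrite mulnA.
rewrite -big_distrr /=.
have -> : (c.+1 - j = (c - j).+1)%N by lia.
rewrite big_mkord binomial.Vandermonde.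
by have -> : (a + b - j = a - j + b)%N by lia.
Qed.

Lemma ndvd_fact p n : prime p -> (n < p)%N -> ~~ (p %| n`!)%N.
Proof.
move=> pp; elim: n => [|n IH] np.
  by rewrite fact0 dvdn1; apply/eqP => p1; rewrite p1 in pp.
rewrite factS Euclid_dvdM // negb_or gtnNdvd //= IH //; lia.
Qed.

Lemma ndvd_bin_small p n m : prime p -> (n < p)%N -> (m <= n)%N ->
  ~~ (p %| 'C(n, m))%N.
Proof.
move=> pp np mn; apply/negP => /(dvdn_mulr (m`! * (n - m)`!)).
by rewrite bin_fact //; apply/negP/ndvd_fact.
Qed.

Lemma dvd_bin_mid p n m : prime p -> (m <= n)%N -> (p <= n)%N -> (m < p)%N ->
  (n - m < p)%N -> (p %| 'C(n, m))%N.
Proof.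
move=> pp mn pn mp nmp.
have : (p %| n`!)%N by apply: dvdn_fact; rewrite prime_gt0.
rewrite -(bin_fact mn) !Euclid_dvdM // => /orP[//|/orP[]].
  by rewrite (negbTE (@ndvd_fact p m pp mp)).
by rewrite (negbTE (@ndvd_fact p (n-m) pp nmp)).
Qed.

Lemma ndvd_ffact p n k : prime p -> (forall i, (i < k)%N -> ~~ (p %| n - i)%N) ->
  ~~ (p %| n ^_ k)%N.
Proof.
move=> pp; elim: k => [|k IH] H.
  by rewrite ffactn0 dvdn1; apply/eqP => p1; rewrite p1 in pp.
rewrite ffactnSr Euclid_dvdM // negb_or IH ?H // => i ik; apply: H; lia.
Qed.

Lemma ndvd_bin_big p n m : prime p -> (p <= m)%N -> (m <= n)%N ->
  (n < p + p)%N -> ~~ (p %| 'C(n, m))%N.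
Proof.
move=> pp pm mn np; rewrite -bin_sub //; apply/negP => /(dvdn_mulr (n - m)`!).
rewrite bin_ffact; apply/negP; apply: ndvd_ffact => // i ik.
apply/negP => /(fun h => dvdn_sub h (dvdnn p)).
rewrite gtnNdvd //; lia.
Qed.

Lemma coefXD1 (F : fieldType) (i k : nat) :
  ((('X + 1) ^+ i : {poly F})`_k) = ('C(i, k))%:R.
Proof.
elim: i k => [|i IH] k.
  by rewrite expr0 coefC bin0n; case: k.
rewrite exprS mulrDl mul1r coefD coefXM.
case: k => [|k] /=; first by rewrite IH !bin0 add0r.
by rewrite !IH binS natrD addrC.
Qed.

Lemma coef_fpol (F : fieldType) a b c i :
  (fpol F a b c)`_i = if (i <= c)%N then (('C(a, i) * 'C(b, c - i))%N)%:R else 0.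
Proof.
rewrite /fpol -(poly_def (c.+1) (fun i => (('C(a, i) * 'C(b, c - i))%N)%:R)).
by rewrite coef_poly.
Qed.

Lemma mup_comp (F : fieldType) (x : F) (h : {poly F}) K :
  (forall j, (j < K)%N -> h`_j = 0) -> h`_K != 0 ->
  mup x (h \Po ('X - x%:P)) = K.
Proof.
move=> h0 hK.
have -> : h = drop_poly K h * 'X^K.
  rewrite -{1}(poly_take_drop K h).
  have -> : take_poly K h = 0; last by rewrite add0r.
  by apply/polyP => j; rewrite coef_take_poly coef0; case: ifP => // /h0.
rewrite comp_polyM mupMr.
  by rewrite comp_Xn_poly mup_XsubCX eqxx.
rewrite /root horner_comp !hornerE subrr horner_coef0 coef_drop_poly add0n.
exact: hK.
Qed.

Lemma fpol_shift (F : fieldType) a b c :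
  fpol F a b c \Po ('X + 1%:P) =
  \poly_(k < c.+1) (('C(a, k) * 'C(a + b - k, c - k))%N)%:R.
Proof.
apply/polyP => k; rewrite coef_poly /fpol.
rewrite (big_morph (fun p => p \Po ('X + 1%:P)) (fun p r => comp_polyD p r _)
   (comp_poly0 _)).
rewrite coef_sum.
under eq_bigr => i _ do rewrite comp_polyZ comp_Xn_poly polyC1 coefZ coefXD1 -natrM.
rewrite -natr_sum; case: ifP => kc.
  by rewrite sum_id.
rewrite big1 // => i _; rewrite (@bin_small i) ?muln0 //.
by apply: leq_trans (ltn_ord i) _; rewrite leqNgt kc.
Qed.

Theorem lemmaA2 (F : closedFieldType) (p a b c : nat) :
  prime p -> p \in [pchar F] ->
  (a < p)%N -> (b < p)%N -> (c <= a + b)%N ->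
  [/\ size (fpol F a b c) = (minn a c).+1,
      mup 0 (fpol F a b c) = maxn 0 (c - b)
    & mup 1 (fpol F a b c) =
      (if [&& (a + b - (p - 1) <= c)%N, (c <= p - 1)%N & (p - 1 < a + b)%N]
       then (a + b - (p - 1))%N else 0%N)].
Proof.
move=> pp pF ap bp cab.
have nz n : ~~ (p %| n)%N -> (n%:R : F) != 0 by rewrite -(dvdn_pcharf pF).
have nzC i : (i <= a)%N -> (c - i <= b)%N ->
    ((('C(a, i) * 'C(b, c - i))%N)%:R : F) != 0.
  move=> ia cib; apply: nz; rewrite Euclid_dvdM // negb_or.
  by rewrite !ndvd_bin_small //; lia.
split.
- have -> : fpol F a b c =
      \poly_(i < (minn a c).+1) ((('C(a, i) * 'C(b, c - i))%N)%:R : F).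
    apply/polyP => i; rewrite coef_fpol coef_poly.
    case: (leqP i c) => ic; case: (ltnP i (minn a c).+1) => im //.
      by rewrite bin_small ?mul0n //; lia.
    by exfalso; lia.
  by rewrite size_poly_eq //=; apply: nzC; lia.
- have E : fpol F a b c = fpol F a b c \Po ('X - (0:F)%:P).
    by rewrite polyC0 subr0 comp_polyXr.
  rewrite E max0n; apply: mup_comp.
    move=> j jcb; rewrite coef_fpol; case: ifP => // _.
    by rewrite (@bin_small b) ?muln0 //; lia.
  by rewrite coef_fpol ifT; [apply: nzC; lia | lia].
- rewrite -[fpol F a b c](comp_polyXaddC_K _ 1) fpol_shift.
  case: ifP => cond.
    apply: mup_comp.
      move=> j jK; rewrite coef_poly; case: ifP => // _.
      apply/eqP; rewrite -(dvdn_pcharf pF) dvdn_mull // dvd_bin_mid //; lia.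
    rewrite coef_poly ifT; last by lia.
    apply: nz; rewrite Euclid_dvdM // negb_or.
    by rewrite !ndvd_bin_small //; lia.
  apply: mup_comp => //.
  rewrite coef_poly /= bin0 mul1n subn0 subn0; apply: nz.
  have [abp|abp] := ltnP (a + b) p; first by rewrite ndvd_bin_small.
  have [cp|cp] := ltnP c p.
    rewrite -bin_sub // ndvd_bin_big //; lia.
  rewrite ndvd_bin_big //; lia.
Qed.
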